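(* Let $\mathcal C$ be an EACP over a field $K$ with a natural basis $\{h_1,\dots,h_n,r\}$ whose multiplication table is $$h_1r=\sum_{j=1}^n a_{1j}h_j+\delta r,\ \ \delta\in\{0,1\},\qquad h_ir=\sum_{j=1}^n a_{ij}h_j\ \ (2\le i\le n),$$ (together with $h_ih_j=0$, $rr=0$, and commutativity). Then for the plenary periods $q_i$ of the $h_i$: (a) if $\delta=0$ then $q_i\in\{1,\infty\}$ for all $i$; (b) if $\delta=1$ then $q_1\in\{1,2,\infty\}$ and $q_i\in\{1,\infty\}$ for $i\neq 1$.
   Context: An EACP is a commutative algebra with a basis $\{h_1,\dots,h_n,r\}$ such that $h_ir=rh_i=\sum_j a_{ij}h_j+b_ir$, $h_ih_j=0$, $rr=0$. For $x=\sum_i\alpha_ih_i+ar$, $h_i\prec x$ means $\alpha_i\ne0$. Plenary powers: $y^{[1]}=yy$, $y^{[m]}=y^{[m-1]}y^{[m-1]}$. The plenary period of $h_j$ is $q_j=\min\{m\in\mathbb N: h_j\prec (h_jr)^{[m]}\}$, and $q_j=\infty$ if this set is empty. *)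

(* Defs.v *)
From mathcomp Require Import all_boot all_order all_algebra.
Set Implicit Arguments. Unset Strict Implicit. Unset Printing Implicit Defensive.
Import GRing.Theory.
Local Open Scope ring_scope.

(* An EACP over a field K with natural basis {h_0,...,h_n, r}
   (h indexed by 'I_n.+1; h_0 plays the role of the paper's h_1).
   An element sum_i alpha_i h_i + a r is represented by the pair (alpha, a).
   Multiplication table: h_i r = r h_i = sum_j A i j h_j + b i r,
   h_i h_j = 0, r r = 0, extended bilinearly. *)
Definition eacp_elt (K : fieldType) (n : nat) := (('I_n.+1 -> K) * K)%type.

Definition eacp_mul (K : fieldType) (n : nat) (A : 'M[K]_(n.+1))
    (b : 'I_n.+1 -> K) (x y : eacp_elt K n) : eacp_elt K n :=
  let c := fun i => x.1 i * y.2 + x.2 * y.1 i in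
  (fun j => \sum_(i < n.+1) c i * A i j, \sum_(i < n.+1) c i * b i).

Definition eacp_h (K : fieldType) (n : nat) (i : 'I_n.+1) : eacp_elt K n :=
  (fun j => if j == i then 1 else 0, 0).
Definition eacp_r (K : fieldType) (n : nat) : eacp_elt K n := (fun _ => 0, 1).

Definition eacp_prec (K : fieldType) (n : nat) (i : 'I_n.+1) (x : eacp_elt K n) : Prop :=
  x.1 i != 0.

(* plenary powers: y^[1] = y y, y^[m] = y^[m-1] y^[m-1]  (iter m squaring) *)
Definition plenary_power (K : fieldType) (n : nat) (A : 'M[K]_(n.+1))
    (b : 'I_n.+1 -> K) (y : eacp_elt K n) (m : nat) : eacp_elt K n :=
  iter m (fun z => eacp_mul A b z z) y.

Definition plen_cond (K : fieldType) (n : nat) (A : 'M[K]_(n.+1))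
    (b : 'I_n.+1 -> K) (j : 'I_n.+1) (m : nat) : Prop :=
  (0 < m)%N /\ eacp_prec j (plenary_power A b (eacp_mul A b (eacp_h K j) (eacp_r K n)) m).

(* q = Some m : the plenary period of h_j is m; q = None : it is infinity *)
Definition plenary_period (K : fieldType) (n : nat) (A : 'M[K]_(n.+1))
    (b : 'I_n.+1 -> K) (j : 'I_n.+1) (q : option nat) : Prop :=
  match q with
  | Some m => plen_cond A b j m /\ (forall k, plen_cond A b j k -> (m <= k)%N)
  | None => forall k, ~ plen_cond A b j k
  end.

Definition cor_b (K : fieldType) (n : nat) (delta : K) : 'I_n.+1 -> K :=
  fun i => if i == ord0 then delta else 0.

(* Main.v *)
Require Import Defs.
From mathcomp Require Import all_boot all_order all_algebra.
Local Open Scope ring_scope.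
Import GRing.Theory.
Set Implicit Arguments. Unset Strict Implicit.

Definition Zr {K : fieldType} {n : nat} (z : eacp_elt K n) : Prop :=
  (forall j, z.1 j = 0) /\ z.2 = 0.

Lemma sq_r0 (K : fieldType) (n : nat) (A : 'M[K]_(n.+1)) (b : 'I_n.+1 -> K)
  (z : eacp_elt K n) : z.2 = 0 -> Zr (eacp_mul A b z z).
Proof.
move=> h; rewrite /Zr /eacp_mul /= h; split.
  by move=> j; apply: big1 => i _; rewrite !(mulr0, mul0r, addr0).
by apply: big1 => i _; rewrite !(mulr0, mul0r, addr0).
Qed.

Lemma iterZ (K : fieldType) (n : nat) (A : 'M[K]_(n.+1)) (b : 'I_n.+1 -> K)
  (y : eacp_elt K n) m : y.2 = 0 -> Zr (plenary_power A b y m.+1).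
Proof.
move=> h; elim: m => [|m [_ IH]]; rewrite /plenary_power /=.
  exact: sq_r0.
exact: sq_r0.
Qed.

Lemma iterZ2 (K : fieldType) (n : nat) (A : 'M[K]_(n.+1)) (b : 'I_n.+1 -> K)
  (y : eacp_elt K n) m k : (plenary_power A b y m).2 = 0 ->
  Zr (plenary_power A b y (k.+1 + m)).
Proof.
move=> h; rewrite /plenary_power iterD; exact: iterZ.
Qed.

Lemma y2 (K : fieldType) (n : nat) (A : 'M[K]_(n.+1)) (b : 'I_n.+1 -> K) j :
  b j = 0 -> (eacp_mul A b (eacp_h K j) (eacp_r K n)).2 = 0.
Proof.
move=> bj; rewrite /eacp_mul /=; apply: big1 => i _.
case: eqP => [->|]; first by rewrite bj mulr0.
by rewrite !(mulr0, mul0r, addr0).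
Qed.

Lemma none_case (K : fieldType) (n : nat) (A : 'M[K]_(n.+1)) (b : 'I_n.+1 -> K) j q :
  b j = 0 -> plenary_period A b j q -> q = Some 1%N \/ q = None.
Proof.
move=> bj; case: q => [m [[m0 H] _]|]; last by right.
exfalso; case: m m0 H => // m _; rewrite /eacp_prec.
have [Z _] := @iterZ K n A b (eacp_mul A b (eacp_h K j) (eacp_r K n)) m (y2 A bj).
by rewrite Z eqxx.
Qed.

Lemma sq2 (K : fieldType) (n : nat) (A : 'M[K]_(n.+1)) (d : K) (z : eacp_elt K n) :
  z.1 ord0 = 0 -> (eacp_mul A (cor_b d) z z).2 = 0.
Proof.
move=> E1; rewrite /eacp_mul /=; apply: big1 => i _; rewrite /cor_b.
case: eqP => [->|]; last by rewrite mulr0.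
by rewrite E1 !(mulr0, mul0r, addr0).
Qed.

Theorem corollary3p4 (K : fieldType) (n : nat) (A : 'M[K]_(n.+1)) (delta : K) :
  (delta = 0 \/ delta = 1) ->
  (delta = 0 -> forall (i : 'I_n.+1) (q : option nat),
      plenary_period A (@cor_b K n delta) i q -> q = Some 1%N \/ q = None) /\
  (delta = 1 ->
      (forall q : option nat, plenary_period A (@cor_b K n delta) ord0 q ->
          q = Some 1%N \/ q = Some 2%N \/ q = None) /\
      (forall (i : 'I_n.+1) (q : option nat), i != ord0 ->
          plenary_period A (@cor_b K n delta) i q -> q = Some 1%N \/ q = None)).
Proof.
move=> _; split.
  move=> d0 i q; apply: none_case; rewrite /cor_b d0; by case: (i == ord0).
move=> d1; split; last first.
  move=> i q ni; apply: none_case; by rewrite /cor_b (negbTE ni).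
case=> [m [[m0 H] Hmin]|]; last by right; right.
case: m m0 H Hmin => // [[|[|m]]] _ H Hmin; [by left|by right; left|].
exfalso.
have N1 : ~ plen_cond A (cor_b delta) ord0 1.
  by move/Hmin.
set y := eacp_mul A (cor_b delta) (eacp_h K ord0) (eacp_r K n).
have E1 : (plenary_power A (cor_b delta) y 1).1 ord0 = 0.
  apply/eqP; apply/negP => h; apply: N1; split => //; exact/negP.
have E2 : (plenary_power A (cor_b delta) y 2).2 = 0.
  rewrite [plenary_power _ _ _ 2]/plenary_power iterS -/(plenary_power _ _ y 1).
  set z := plenary_power _ _ y 1 in E1 *.
  exact: sq2.
have [Z _] := @iterZ2 K n A _ y 2 m E2.
move: H; rewrite /eacp_prec.
have -> : (m.+3 = m.+1 + 2)%N by rewrite addnC.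
by rewrite Z eqxx.
Qed.
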